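(* For every connected finite simple graph $\Gamma$ on vertex set $[n]$, $n\ge1$, $$F_\Gamma=\sum_{i\in[n]}\big(F_{\Gamma\setminus\{i\}}\big)_1,$$ where $\Gamma\setminus\{i\}$ is the induced subgraph on $[n]\setminus\{i\}$.
   Context: For a coloring $\lambda:V\to\mathbb{N}=\{1,2,\dots\}$ of a finite simple graph $\Gamma$ with values $i_1<\dots<i_k$, let $I_j=\lambda^{-1}(\{i_1,\dots,i_j\})$, $I_0=\emptyset$. It is ordered if for each $j$, no two distinct vertices $u,w$ with $\lambda(u)=\lambda(w)=i_j$ are joined by a path in $\Gamma$ (possibly a single edge) all of whose internal vertices lie in $I_{j-1}$. $F_\Gamma=\sum_{\lambda\text{ ordered}}\prod_{v\in V}x_{\lambda(v)}$, with $F_\Gamma=1$ for the graph with no vertices (it equals the lattice point enumerator of the graph-associahedron of $\Gamma$). For a composition $\alpha=(a_1,\dots,a_k)$, $M_\alpha=\sum_{i_1<\dots<i_k}x_{i_1}^{a_1}\cdots x_{i_k}^{a_k}$, $M_{()}=1$. The shifting operator $G\mapsto(G)_1$ on quasisymmetric functions is the linear map with $(M_{(a_1,\dots,a_k)})_1=M_{(a_1,\dots,a_k,1)}$. *)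

(* Defs.v *)
From mathcomp Require Import all_boot.
Set Implicit Arguments. Unset Strict Implicit. Unset Printing Implicit Defensive.

(* A formal power series in x_1, x_2, ... with nat coefficients is represented
   by its coefficient function on monomials.  A monomial is an exponent list
   beta : seq nat, where nth 0 beta j is the exponent of x_(j+1)
   (trailing zeros are irrelevant for all series below). *)
Definition series := seq nat -> nat.

(* A coloring lam : T -> nat (the nat value c stands for the color c+1).
   [lower e lam u] is the set I_{j-1} of vertices of color < lam u. *)
Definition lower_rel (T : finType) (e : rel T) (lam : T -> nat) (c : nat) : rel T :=
  [rel a b | [&& lam a < c, lam b < c & e a b]].

Definition low_path (T : finType) (e : rel T) (lam : T -> nat) (c : nat) (u w : T) : bool :=
  e u w ||
  [exists x, exists y,
     [&& lam x < c, lam y < c, e u x, e y w & connect (lower_rel e lam c) x y]].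

Definition ordered_col (T : finType) (e : rel T) (lam : T -> nat) : bool :=
  [forall u, forall w,
     ((u != w) && (lam u == lam w)) ==> ~~ low_path e lam (lam u) u w].

(* Coefficient of x^beta in F_Gamma: the number of ordered colorings whose
   colour-class sizes are given by beta (colours beyond size beta would give
   a nonzero exponent, so they range over 'I_(size beta)). *)
Definition F_graph (T : finType) (e : rel T) : series := fun beta =>
  #|[set lam : {ffun T -> 'I_(size beta)} |
       ordered_col e (fun v => nat_of_ord (lam v)) &&
       [forall j : 'I_(size beta), #|[set v | lam v == j]| == nth 0 beta j]]|.

(* The shifting operator G |-> (G)_1, (M_alpha)_1 = M_(alpha,1), expressed on
   coefficients of a quasisymmetric G: the coefficient of x^beta in (G)_1,
   where the nonzero exponents of beta in order are (b_1,...,b_m), is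
   [b_m = 1] * (coefficient of x_1^b_1 ... x_(m-1)^b_(m-1) in G). *)
Definition shift1 (G : series) : series := fun beta =>
  let s := [seq a <- beta | a != 0] in
  if (s != [::]) && (last 0 s == 1) then G (take (size s).-1 s) else 0.

Definition del_vertex n (i : 'I_n) := {v : 'I_n | v != i}.
Definition del_rel n (e : rel 'I_n) (i : 'I_n) : rel (del_vertex i) :=
  fun a b => e (val a) (val b).
Arguments del_rel {n} e i _ _.

(* Main.v *)
Require Import Defs.
From mathcomp Require Import all_boot.
Set Implicit Arguments. Unset Strict Implicit. Unset Printing Implicit Defensive.

Lemma homo_connect (T T' : finType) (e : rel T) (e' : rel T') (f : T -> T') :
  (forall x y, e x y -> e' (f x) (f y)) ->
  forall x y, connect e x y -> connect e' (f x) (f y).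
Proof.
move=> H x _ /connectP[p ep ->]; elim: p x ep => //= y p IHp x /andP[exy /IHp].
by apply: connect_trans; apply: connect1; apply: H.
Qed.

Lemma ordered_mono (T : finType) (e : rel T) (lam : T -> nat) (h : nat -> nat) :
  (forall u v, (h (lam u) < h (lam v)) = (lam u < lam v)) ->
  ordered_col e (fun v => h (lam v)) = ordered_col e lam.
Proof.
move=> Hh.
have Heq : forall u v, (h (lam u) == h (lam v)) = (lam u == lam v).
  move=> u v; apply/eqP/eqP=> [E|->//]; apply/eqP; rewrite eqn_leq.
  by apply/andP; split; rewrite leqNgt -Hh E ltnn.
have Hlow : forall u w, low_path e (fun v => h (lam v)) (h (lam u)) u w
                        = low_path e lam (lam u) u w.
  move=> u w; rewrite /low_path.
  have Er : lower_rel e (fun v => h (lam v)) (h (lam u)) =2 lower_rel e lam (lam u).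
    by move=> a b; rewrite /lower_rel /= !Hh.
  congr (_ || _); apply: eq_existsb => x; apply: eq_existsb => y.
  by rewrite !Hh (eq_connect Er).
rewrite /ordered_col; apply: eq_forallb => u; apply: eq_forallb => w.
by rewrite /= Heq Hlow.
Qed.

Lemma top_unique (T : finType) (e : rel T) (lam : T -> nat) (c : nat) :
  (forall u v, connect e u v) ->
  ordered_col e lam -> (forall v, lam v <= c) ->
  forall u w, lam u = c -> lam w = c -> u = w.
Proof.
move=> Hconn Hord Hle u w Hu Hw.
apply/eqP; apply/negPn/negP => Huw.
suff [w' [Hw'u Hw'c Hlp]] :
    exists w', [/\ w' != u, lam w' = c & low_path e lam c u w'].
  move/forallP: Hord => /(_ u) /forallP /(_ w') /implyP.
  by rewrite eq_sym Hw'u Hu Hw'c eqxx /= Hlp => /(_ isT).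
have /connectP [p Hp Hlast] := Hconn u w.
have gen : forall p x, (x = u \/ (lam x < c /\ exists x1,
      [/\ e u x1, lam x1 < c & connect (lower_rel e lam c) x1 x])) ->
    path e x p -> lam (last x p) = c -> last x p != u ->
    exists w', [/\ w' != u, lam w' = c & low_path e lam c u w'].
  elim=> [|z q IH] x Hx /=.
  - move=> _ Hc Hne. case: Hx => [Exu|[Hlt _]].
      by rewrite Exu eqxx in Hne.
    by rewrite Hc ltnn in Hlt.
  - move=> /andP[Exz Hq] Hc Hne.
    have Hz : lam z <= c := Hle z.
    rewrite leq_eqVlt in Hz; case/orP: Hz => [/eqP Hzc | Hzlt].
    + case: (eqVneq z u) => [Ezu | Hzu].
        by apply: (IH z) => //; left.
      exists z; split => //. rewrite /low_path.
      case: Hx => [Exu | [Hxlt [x1 [Hux1 Hx1 Hcon]]]].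
        by rewrite -Exu Exz.
      apply/orP; right; apply/existsP; exists x1; apply/existsP; exists x.
      by rewrite Hx1 Hxlt Hux1 Exz Hcon.
    + apply: (IH z) => //; right; split => //.
      case: Hx => [Exu | [Hxlt [x1 [Hux1 Hx1 Hcon]]]].
        by exists z; split => //; rewrite -?Exu ?connect0.
      exists x1; split => //. apply: connect_trans Hcon _; apply: connect1.
      by rewrite /lower_rel /= Hxlt Hzlt Exz.
apply: (gen p u) => //; [by left | by rewrite -Hlast | by rewrite -Hlast eq_sym].
Qed.

Lemma eq_ordered (T : finType) (e : rel T) (l1 l2 : T -> nat) :
  l1 =1 l2 -> ordered_col e l1 = ordered_col e l2.
Proof.
move=> H; rewrite /ordered_col /low_path.
have Er : forall c, lower_rel e l1 c =2 lower_rel e l2 c.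
  by move=> c a b; rewrite /lower_rel /= !H.
apply: eq_forallb => u; apply: eq_forallb => w; rewrite !H.
congr (_ ==> ~~ (_ || _)); apply: eq_existsb => x; apply: eq_existsb => y.
by rewrite !H (eq_connect (Er _)).
Qed.

Definition Fm (T : finType) (e : rel T) (m : nat) (beta : seq nat) : nat :=
  #|[set lam : {ffun T -> 'I_m} |
       ordered_col e (fun v => nat_of_ord (lam v)) &&
       [forall j : 'I_m, #|[set v | lam v == j]| == nth 0 beta j]]|.

Lemma F_Fm (T : finType) (e : rel T) beta m : size beta = m -> F_graph e beta = Fm e m beta.
Proof. by move=> <-. Qed.

Lemma Fm_pos (T : finType) m beta (lam : {ffun T -> 'I_m}) :
  [forall j : 'I_m, #|[set v | lam v == j]| == nth 0 beta j] ->
  forall v, 0 < nth 0 beta (lam v).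
Proof.
move=> /forallP H v; move: (H (lam v)) => /eqP <-.
by apply/card_gt0P; exists v; rewrite inE.
Qed.
Lemma compress (T : finType) (e : rel T) beta :
  [seq a <- beta | a != 0] != [::] ->
  F_graph e beta = F_graph e [seq a <- beta | a != 0].
Proof.
move=> Hne.
have Hsb : 0 < size beta by case: beta Hne.
set pos := [seq j <- iota 0 (size beta) | nth 0 beta j != 0].
have Hs : [seq a <- beta | a != 0] = map (nth 0 beta) pos.
  by rewrite -{1}(mkseq_nth 0 beta) /mkseq filter_map.
have Hmem : forall j, (j \in pos) = (j < size beta) && (nth 0 beta j != 0).
  by move=> j; rewrite mem_filter mem_iota add0n andbC.
have Hsort : sorted ltn pos := sorted_filter ltn_trans _ (iota_ltn_sorted 0 _).
have Huniq : uniq pos := filter_uniq _ (iota_uniq _ _).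
have Hgb : forall k, k < size pos -> nth 0 pos k < size beta.
  by move=> k Hk; have := mem_nth 0 Hk; rewrite Hmem => /andP[].
have Hlt : forall k l, k < size pos -> l < size pos -> k < l ->
    nth 0 pos k < nth 0 pos l.
  by move=> k l Hk Hl; apply: (sorted_ltn_nth ltn_trans 0 Hsort).
have Hmono : forall k l, k < size pos -> l < size pos ->
    (nth 0 pos k < nth 0 pos l) = (k < l).
  move=> k l Hk Hl; case: (ltngtP k l) => H.
  - exact: Hlt.
  - by apply/negbTE; rewrite -leqNgt ltnW // Hlt.
  - by rewrite H ltnn.
pose d : 'I_(size beta) := Ordinal Hsb.
rewrite Hs (@F_Fm _ e (map (nth 0 beta) pos) (size pos)) ?size_map // (@F_Fm _ e beta (size beta)) //.
rewrite /Fm.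
pose g := fun k => nth 0 pos k.
pose G := fun lam' : {ffun T -> 'I_(size pos)} =>
  [ffun v => insubd d (g (lam' v))] : {ffun T -> 'I_(size beta)}.
have HG : forall lam' v, val (G lam' v) = g (lam' v).
  by move=> l v; rewrite ffunE val_insubd /= Hgb.
set B := [set lam' : {ffun T -> 'I_(size pos)} | _].
rewrite -(card_in_imset (f:=G) (D:=B)); last first.
  move=> l1 l2 _ _ E; apply/ffunP => v; apply/val_inj/eqP.
  rewrite -(nth_uniq 0 (ltn_ord _) (ltn_ord _) Huniq).
  by rewrite -/(g _) -/(g _) -!HG E.
apply: eq_card => lam; rewrite inE; apply/idP/imsetP.
- move=> /andP[Hord Hcl].
  have Hp : forall v, (lam v : nat) \in pos.
    by move=> v; rewrite Hmem ltn_ord -lt0n (Fm_pos Hcl).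
  have Hk : forall v, index (lam v : nat) pos < size pos.
    by move=> v; rewrite index_mem.
  pose lam' : {ffun T -> 'I_(size pos)} := [ffun v => Ordinal (Hk v)].
  have Hl' : forall v, g (lam' v) = lam v.
    by move=> v; rewrite ffunE /= /g nth_index.
  exists lam'.
  + rewrite inE; apply/andP; split.
    * rewrite -(@ordered_mono _ e (fun v => nat_of_ord (lam' v)) g); last first.
        by move=> u v; apply: Hmono.
      rewrite (@eq_ordered _ e _ (fun v => nat_of_ord (lam v))) //.
    * apply/forallP => k.
      have Hkb := Hgb _ (ltn_ord k).
      move/forallP: Hcl => /(_ (Ordinal Hkb)) /eqP.
      rewrite (nth_map 0) //= => <-.
      apply/eqP; apply: eq_card => v; rewrite !inE.
      apply/eqP/eqP => E.
      -- apply: val_inj => /=. by rewrite -Hl' E.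
      -- apply: val_inj. move: E => /(congr1 val) /= E.
         by rewrite ffunE /= E /g index_uniq.
  + by apply/ffunP => v; apply: val_inj; rewrite HG Hl'.
- move=> [lam' Hl' ->]. move: Hl'; rewrite inE => /andP[Hord Hcl].
  apply/andP; split.
  + rewrite (@eq_ordered _ e _ (fun v => g (lam' v))); last by move=> v; rewrite HG.
    by rewrite ordered_mono // => u v; apply: Hmono.
  + apply/forallP => j.
    case Hj: ((j : nat) \in pos).
    * have Hk : index (j : nat) pos < size pos by rewrite index_mem.
      move/forallP: Hcl => /(_ (Ordinal Hk)) /eqP.
      rewrite (nth_map 0) //= nth_index // => <-.
      apply/eqP; apply: eq_card => v; rewrite !inE.
      apply/eqP/eqP => E.
      -- apply: val_inj => /=. apply/eqP.
         by rewrite -(nth_uniq 0 (ltn_ord _) Hk Huniq) -/(g _) -HG E nth_index.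
      -- by apply: val_inj; rewrite HG E /= /g nth_index.
    * have -> : nth 0 beta j = 0.
        by move: Hj; rewrite Hmem ltn_ord /= => /negbFE/eqP.
      rewrite cards_eq0; apply/eqP/setP => v; rewrite !inE.
      apply/negbTE/eqP => E. move: Hj. by rewrite -E HG /g mem_nth.
Qed.

Lemma low_path_del n (e : rel 'I_n) (i : 'I_n) (lam : 'I_n -> nat) c
    (u w : del_vertex i) :
  c <= lam i ->
  low_path (del_rel e i) (fun v => lam (val v)) c u w
  = low_path e lam c (val u) (val w).
Proof.
move=> Hic; rewrite /low_path; congr (_ || _); apply/existsP/existsP.
- move=> [x /existsP [y /and5P [Hx Hy Hux Hyw Hc]]].
  rewrite /del_rel in Hux Hyw.
  exists (val x); apply/existsP; exists (val y); rewrite Hx Hy Hux Hyw /=.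
  by move: Hc; apply: homo_connect => a b; rewrite /lower_rel /=.
- move=> [x /existsP [y /and5P [Hx Hy Hux Hyw Hc]]].
  have Hne : forall a, lam a < c -> a != i.
    by move=> a Ha; apply/eqP => E; move: Ha; rewrite E ltnNge Hic.
  have Hv : forall a, lam a < c -> val (insubd u a) = a.
    by move=> a Ha; rewrite val_insubd Hne.
  exists (insubd u x); apply/existsP; exists (insubd u y).
  rewrite /del_rel /= !Hv // Hx Hy Hux Hyw /=.
  have -> : insubd u x = insubd u (val (insubd u x)) by rewrite valKd.
  have -> : insubd u y = insubd u (val (insubd u y)) by rewrite valKd.
  rewrite !Hv //.
  move: Hc; apply: homo_connect => a b /and3P[Ha Hb Hab].
  by rewrite /lower_rel /= /del_rel !Hv // Ha Hb Hab.
Qed.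

Lemma ordered_del n (e : rel 'I_n) (i : 'I_n) (lam : 'I_n -> nat) m :
  lam i = m -> (forall v, v != i -> lam v < m) ->
  ordered_col e lam = ordered_col (del_rel e i) (fun v => lam (val v)).
Proof.
move=> Hi Hlt; apply/forallP/forallP.
- move=> H u; apply/forallP => w; apply/implyP => /andP[Hne Heq].
  have := forallP (H (val u)) (val w); rewrite /= in Heq; rewrite Heq andbT.
  rewrite val_eqE Hne /=.
  by rewrite low_path_del // Hi ltnW // Hlt // (valP u).
- move=> H u; apply/forallP => w; apply/implyP => /andP[Hne /eqP Heq].
  case: (eqVneq u i) => [Eu|Hu].
    have Ew : w = i.
      apply/eqP/negPn/negP => Hw; move: (Hlt w Hw); by rewrite -Heq Eu Hi ltnn.
    by rewrite Eu Ew eqxx in Hne.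
  case: (eqVneq w i) => [Ew|Hw].
    by move: (Hlt u Hu); rewrite Heq Ew Hi ltnn.
  pose u' : del_vertex i := Sub u Hu.
  pose w' : del_vertex i := Sub w Hw.
  have := forallP (H u') w'.
  rewrite /= -val_eqE /= Hne Heq eqxx /=.
  by rewrite low_path_del //= Hi ltnW // Hlt.
Qed.

Lemma card_del n (i : 'I_n) (f : 'I_n -> nat) (g : del_vertex i -> nat) k :
  k < f i -> (forall v', f (val v') = g v') ->
  #|[set v | f v == k]| = #|[set v' : del_vertex i | g v' == k]|.
Proof.
move=> Hk Hfg; rewrite -(card_imset _ val_inj); apply: eq_card => v.
rewrite inE; apply/eqP/imsetP => [E|[v' Hv' ->]].
- have Hvi : v != i by apply/eqP => Evi; move: Hk; rewrite -Evi E ltnn.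
  by exists (Sub v Hvi); rewrite // inE -Hfg /= E.
- by move: Hv'; rewrite inE -Hfg => /eqP.
Qed.

Lemma sum_split (S I : finType) (P : pred S) (Q : S -> I -> bool) :
  (forall x, P x -> #|[set i | Q x i]| = 1) ->
  #|[set x | P x]| = \sum_i #|[set x | P x && Q x i]|.
Proof.
move=> H; rewrite -sum1_card big_mkcond /=.
under [RHS]eq_bigr => i _ do rewrite -sum1_card big_mkcond.
rewrite [RHS]exchange_big; apply: eq_bigr => x _; rewrite inE.
case: ifP => Hx.
- under eq_bigr => i _ do rewrite inE Hx /=.
  by rewrite -big_mkcond /= sum1dep_card H.
- by rewrite big1 // => i _; rewrite inE Hx.
Qed.

Lemma part_del n (e : rel 'I_n) (i : 'I_n) (t : seq nat) :
  #|[set lam : {ffun 'I_n -> 'I_(size t).+1} |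
      (ordered_col e (fun v => nat_of_ord (lam v)) &&
       [forall j : 'I_(size t).+1, #|[set v | lam v == j]| == nth 0 (rcons t 1) j])
      && (lam i == ord_max)]|
  = Fm (del_rel e i) (size t) t.
Proof.
rewrite /Fm.
pose ext := fun l : {ffun del_vertex i -> 'I_(size t)} =>
  [ffun v => if (insub v : option (del_vertex i)) is Some v'
             then widen_ord (leqnSn _) (l v') else ord_max]
  : {ffun 'I_n -> 'I_(size t).+1}.
have Hei : forall l, ext l i = ord_max.
  by move=> l; rewrite ffunE insubF // eqxx.
have Hev : forall l (v' : del_vertex i), ext l (val v') = widen_ord (leqnSn _) (l v').
  by move=> l v'; rewrite ffunE valK.
set B := [set l : {ffun del_vertex i -> 'I_(size t)} | _].
rewrite -(card_in_imset (f := ext) (D := B)); last first.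
  move=> l1 l2 _ _ E; apply/ffunP => v'; apply: val_inj.
  by move/ffunP: E => /(_ (val v')); rewrite !Hev => /(congr1 val).
apply: eq_card => lam; rewrite inE; apply/idP/imsetP.
- move=> /andP[/andP[Hord Hcl] /eqP Hi].
  have Htop : #|[set v | lam v == ord_max]| = 1.
    by move/forallP: Hcl => /(_ ord_max) /eqP ->; rewrite nth_rcons ltnn eqxx.
  have Hi' : (lam i : nat) = size t by rewrite Hi.
  have Hv : forall v, v != i -> (lam v : nat) < size t.
    move=> v Hvi; rewrite ltn_neqAle -ltnS ltn_ord andbT.
    apply/negP => /eqP E.
    have : [set v; i] \subset [set v | lam v == ord_max].
      apply/subsetP => x; rewrite !inE => /orP[]/eqP->; rewrite ?Hi //.
      by rewrite -(inj_eq val_inj) /= E.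
    by move/subset_leq_card; rewrite Htop cards2 Hvi.
  pose lam' := [ffun v' : del_vertex i => Ordinal (Hv (val v') (valP v'))]
    : {ffun del_vertex i -> 'I_(size t)}.
  have Hl' : forall v', (lam' v' : nat) = lam (val v') by move=> v'; rewrite ffunE.
  exists lam'.
  + rewrite inE; apply/andP; split.
    * rewrite (@eq_ordered _ _ _ (fun v' => nat_of_ord (lam (val v')))) //.
      by rewrite -(@ordered_del n e i (fun v => nat_of_ord (lam v)) (size t)).
    * apply/forallP => k.
      move/forallP: Hcl => /(_ (widen_ord (leqnSn _) k)) /eqP.
      rewrite nth_rcons /= ltn_ord => <-.
      have E1 : #|[set v | lam v == widen_ord (leqnSn _) k]|
                = #|[set v | nat_of_ord (lam v) == k]|.
        by apply: eq_card => v; rewrite !inE -val_eqE.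
      have E2 : #|[set v' | lam' v' == k]|
                = #|[set v' | nat_of_ord (lam' v') == k]|.
        by apply: eq_card => v; rewrite !inE -val_eqE.
      rewrite E1 E2 (@card_del n i (fun v => nat_of_ord (lam v))
                        (fun v' => nat_of_ord (lam' v'))) //.
      by rewrite Hi'.
  + apply/ffunP => v; apply: val_inj.
    case: (eqVneq v i) => [->|Hvi]; first by rewrite Hei Hi.
    have -> : v = val (Sub v Hvi : del_vertex i) by [].
    by rewrite Hev /= Hl'.
- move=> [l Hl ->]; move: Hl; rewrite inE => /andP[Hord Hcl].
  have Hv : forall v, v != i -> (ext l v : nat) < size t.
    move=> v Hvi; have -> : v = val (Sub v Hvi : del_vertex i) by [].
    by rewrite Hev /= ltn_ord.
  have Hi' : (ext l i : nat) = size t by rewrite Hei.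
  apply/andP; split; last by rewrite Hei.
  apply/andP; split.
  + rewrite (@ordered_del n e i (fun v => nat_of_ord (ext l v)) (size t) Hi' Hv).
    rewrite (@eq_ordered _ _ _ (fun v' => nat_of_ord (l v'))) // => v'.
    by rewrite Hev.
  + apply/forallP => j. case: (ltnP j (size t)) => Hj.
    * move/forallP: Hcl => /(_ (Ordinal Hj)) /eqP.
      rewrite nth_rcons Hj => <-.
      have E1 : #|[set v | ext l v == j]|
                = #|[set v | nat_of_ord (ext l v) == j]|.
        by apply: eq_card => v; rewrite !inE -val_eqE.
      have E2 : #|[set v' | l v' == Ordinal Hj]|
                = #|[set v' | nat_of_ord (l v') == j]|.
        by apply: eq_card => v; rewrite !inE -val_eqE.
      rewrite E1 E2 (@card_del n i (fun v => nat_of_ord (ext l v))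
                        (fun v' => nat_of_ord (l v'))) ?Hi' //.
      by move=> v'; rewrite Hev.
    * have Ej : (j : nat) = size t by apply/eqP; rewrite eqn_leq Hj -ltnS ltn_ord.
      rewrite nth_rcons Ej ltnn eqxx.
      have -> : [set v | ext l v == j] = [set i].
        apply/setP => v; rewrite !inE.
        case: (eqVneq v i) => [->|Hvi]; first by rewrite -val_eqE /= Hi' Ej eqxx.
        apply/negbTE; rewrite -val_eqE /= Ej.
        by apply/negP => /eqP E; move: (Hv v Hvi); rewrite E ltnn.
      by rewrite cards1.
Qed.

Lemma shift1_rcons (G : series) beta t a :
  [seq x <- beta | x != 0] = rcons t a ->
  shift1 G beta = if a == 1 then G t else 0.
Proof.
move=> E; rewrite /shift1 E last_rcons.
have -> : (rcons t a != [::]) = true by case: (t).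
have -> : take (size (rcons t a)).-1 (rcons t a) = t.
  by rewrite size_rcons -cats1 take_size_cat.
by [].
Qed.

Lemma shift1_nil (G : series) beta :
  [seq x <- beta | x != 0] = [::] -> shift1 G beta = 0.
Proof. by move=> E; rewrite /shift1 E. Qed.

Lemma nil_zero n (e : rel 'I_n) beta :
  0 < n -> [seq x <- beta | x != 0] = [::] -> F_graph e beta = 0.
Proof.
move=> Hn Hs; rewrite /F_graph; apply/eqP; rewrite cards_eq0; apply/eqP/setP => lam.
rewrite !inE; apply/negbTE/negP => /andP[_ Hcl].
have Hp := Fm_pos Hcl (Ordinal Hn).
have Hj := ltn_ord (lam (Ordinal Hn)).
have : nth 0 beta (lam (Ordinal Hn)) \in [seq x <- beta | x != 0].
  by rewrite mem_filter mem_nth // andbT -lt0n.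
by rewrite Hs.
Qed.

Lemma top_zero n (e : rel 'I_n) t a :
  (forall u v, connect e u v) -> 1 < a -> Fm e (size t).+1 (rcons t a) = 0.
Proof.
move=> Hconn Ha; rewrite /Fm; apply/eqP; rewrite cards_eq0; apply/eqP/setP => lam.
rewrite !inE; apply/negbTE/negP => /andP[Hord Hcl].
move/forallP: Hcl => /(_ ord_max) /eqP; rewrite nth_rcons ltnn eqxx => Hc.
have : #|[set v | lam v == ord_max]| <= 1.
  apply/card_le1_eqP => u w; rewrite !inE => /eqP Hu /eqP Hw.
  apply: (top_unique (c := size t) Hconn Hord).
  - by move=> v; rewrite -ltnS ltn_ord.
  - by rewrite Hw.
  - by rewrite Hu.
by rewrite Hc leqNgt Ha.
Qed.

Theorem mainTheorem15 (n : nat) (e : rel 'I_n) :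
  0 < n ->
  irreflexive e -> symmetric e ->
  (forall u v : 'I_n, connect e u v) ->
  forall beta : seq nat,
    F_graph e beta = \sum_(i < n) shift1 (F_graph (del_rel e i)) beta.
Proof.
move=> Hn _ _ Hconn beta.
have [E|[t [a E]]] : [seq x <- beta | x != 0] = [::] \/
    exists t a, [seq x <- beta | x != 0] = rcons t a.
  by case/lastP: [seq x <- beta | x != 0]; [left | right; exists s, x].
- rewrite nil_zero // big1 // => i _; exact: shift1_nil.
- under eq_bigr => i _ do rewrite (shift1_rcons _ E).
  have Hne : [seq x <- beta | x != 0] != [::] by rewrite E; case: (t).
  rewrite (compress e Hne) E.
  have Ha0 : a != 0.
    have : a \in [seq x <- beta | x != 0] by rewrite E mem_rcons mem_head.
    by rewrite mem_filter => /andP[].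
  case: (eqVneq a 1) => [Ea|Ha1].
  + rewrite Ea (@F_Fm _ e (rcons t 1) (size t).+1) ?size_rcons // /Fm.
    rewrite (@sum_split _ _
      (fun lam : {ffun 'I_n -> 'I_(size t).+1} =>
         ordered_col e (fun v => nat_of_ord (lam v)) &&
         [forall j : 'I_(size t).+1, #|[set v | lam v == j]| == nth 0 (rcons t 1) j])
      (fun lam i => lam i == ord_max)).
      apply: eq_bigr => i _; exact: part_del.
    move=> lam /andP[_ /forallP /(_ ord_max) /eqP].
    by rewrite nth_rcons ltnn eqxx.
  + rewrite big1 // (@F_Fm _ e (rcons t a) (size t).+1) ?size_rcons //.
    apply: top_zero => //.
    by rewrite ltn_neqAle eq_sym Ha1 lt0n Ha0.
Qed.
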